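(* Let $f\in L^1(\mathbb{R})$ satisfy $\int_\mathbb{R}|y|^\epsilon|f(y)|\,\mathrm{d}y<\infty$ for some $\epsilon>0$, and for $k\in\mathbb{N}$ set $g_k(x):=(1+|x|^\epsilon)|f_k(x)|$. If for some $\overline{k}\in\mathbb{N}$ $$\sum_{m\in\mathbb{Z}}\sup_{z\in[m,m+1)}g_{\overline{k}}(z)<\infty,$$ then $\sum_{m\in\mathbb{Z}}\sup_{z\in[m,m+1)}g_k(z)<\infty$ for every $k\ge\overline{k}$.
   Context: $f_1:=f$, $f_{k+1}:=f_k*f$, i.e. $f_{k+1}(x)=\int_\mathbb{R} f_k(x-y)f(y)\,\mathrm{d}y$. *)

(* Defs.v *)
From HB Require Import structures.
From mathcomp Require Import all_boot all_order all_algebra.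
From mathcomp Require Import all_classical all_reals all_analysis.
Set Implicit Arguments. Unset Strict Implicit. Unset Printing Implicit Defensive.
Import Order.TTheory GRing.Theory Num.Theory.
Import numFieldNormedType.Exports.
Local Open Scope classical_set_scope.
Local Open Scope ring_scope.

Definition conv (R : realType) (h f : R -> R) : R -> R :=
  fun x => Rintegral (@lebesgue_measure R) setT (fun y => h (x - y) * f y).

(* convpow_aux f n = f_{n+1} *)
Fixpoint convpow_aux (R : realType) (f : R -> R) (n : nat) : R -> R :=
  match n with
  | 0 => f
  | n.+1 => conv (convpow_aux f n) f
  end.

Definition fpow (R : realType) (f : R -> R) (k : nat) : R -> R :=
  convpow_aux f k.-1.

Definition gk (R : realType) (f : R -> R) (eps : R) (k : nat) : R -> R :=
  fun x => (1 + `|x| `^ eps) * `|fpow f k x|.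

Definition amalgam_sum (R : realType) (g : R -> R) : \bar R :=
  \esum_(m in [set: int])
     ereal_sup [set (g z)%:E | z in `[(m%:~R : R), m%:~R + 1[ ].

(* Main.v *)
Require Import Defs.
From HB Require Import structures.
From mathcomp Require Import all_boot all_order all_algebra.
From mathcomp Require Import all_classical all_reals all_analysis.
From mathcomp Require Import ring lra measurable_realfun zify.
From Stdlib Require Import Lia.
Import Order.TTheory GRing.Theory Num.Theory.
Import numFieldNormedType.Exports.
Local Open Scope classical_set_scope.
Local Open Scope ring_scope.

Lemma powR_ineq (R : realType) (eps x y : R) : 0 <= eps ->
  1 + `|x| `^ eps <= 2 `^ eps * ((1 + `|x - y| `^ eps) * (1 + `|y| `^ eps)).
Proof.
move=> e0.
have hx : `|x| <= `|x - y| + `|y|.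
  by rewrite -{1}(subrK y x) ler_normD.
have u0 := normr_ge0 (x - y); have v0 := normr_ge0 y.
move: hx u0 v0; move: (`|x - y|) (`|y|) => u v hx u0 v0.
have ue0 : 0 <= u `^ eps := powR_ge0 _ _.
have ve0 : 0 <= v `^ eps := powR_ge0 _ _.
have t1 : 1 <= 2 `^ eps.
  by have := @ler_powR R 2 (ler1n _ _) 0 eps e0; rewrite powRr0.
have key : `|x| `^ eps <= 2 `^ eps * (u `^ eps + v `^ eps).
  have [uv|vu] := leP u v.
    have : `|x| `^ eps <= (2 * v) `^ eps.
      apply: ge0_ler_powR => //; rewrite ?nnegrE//; first by rewrite mulr_ge0.
      by apply: (le_trans hx); lra.
    rewrite powRM//; first by move=> h; apply: (le_trans h); nra.
  have : `|x| `^ eps <= (2 * u) `^ eps.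
    apply: ge0_ler_powR => //; rewrite ?nnegrE//; first by rewrite mulr_ge0.
    by apply: (le_trans hx); lra.
  rewrite powRM//; first by move=> h; apply: (le_trans h); nra.
have p0 : 0 <= 2 `^ eps * (u `^ eps * v `^ eps) by rewrite !mulr_ge0// powR_ge0.
nra.
Qed.

Lemma le_int_nm d (T : measurableType d) (R : realType)
  (mu : {measure set T -> \bar R}) (f g : T -> \bar R) :
  (forall x, (0 <= f x)%E) -> (forall x, (f x <= g x)%E) ->
  (\int[mu]_x f x <= \int[mu]_x g x)%E.
Proof.
move=> f0 fg.
have g0 : forall x, (0 <= g x)%E by move=> x; exact: le_trans (f0 x) (fg x).
rewrite !ge0_integralTE//; apply: ereal_sup_le => _ [h hf <-].
by exists h => // x; exact: le_trans (hf x) (fg x).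
Qed.

Lemma abs_Rint {d} {T : measurableType d} {R : realType}
  (mu : {measure set T -> \bar R}) (h : T -> R) :
  ((`|Rintegral mu setT h|)%:E <= \int[mu]_x (`|h x|)%:E)%E.
Proof.
rewrite /Rintegral.
set c := (\int[mu]_x (`|h x|)%:E)%E.
have hp : (\int[mu]_x ((EFin \o h)^\+ x) <= c)%E.
  apply: le_int_nm => x; first exact: funepos_ge0.
  rewrite funeposE /= -EFin_max lee_fin.
  by rewrite ge_max normr_ge0 ler_norm.
have hn : (\int[mu]_x ((EFin \o h)^\- x) <= c)%E.
  apply: le_int_nm => x; first exact: funeneg_ge0.
  rewrite funenegE /= -EFin_max lee_fin.
  by rewrite ge_max normr_ge0 -normrN ler_norm.
have p0 : (0 <= \int[mu]_x ((EFin \o h)^\+ x))%E by apply: integral_ge0 => x _; exact: funepos_ge0.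
have n0 : (0 <= \int[mu]_x ((EFin \o h)^\- x))%E by apply: integral_ge0 => x _; exact: funeneg_ge0.
rewrite integralE.
move: hp hn p0 n0.
case: (\int[mu]_x ((EFin \o h)^\+ x))%E => [a| |];
case: (\int[mu]_x ((EFin \o h)^\- x))%E => [b| |] //=;
  move: c => [r| |] //= ha hb a0 b0; rewrite ?lee_fin ?normr0 ?leey //.
- move: ha hb a0 b0; rewrite !lee_fin => ha hb a0 b0.
  by rewrite ler_norml; apply/andP; split; lra.
Qed.

Lemma floor_set (R : realType) (c : R) (j : int) :
  [set y : R | Num.floor (c - y) = j] = `]c - (j + 1)%:~R, c - j%:~R]%classic.
Proof.
apply/seteqP; split => y /=.
  move=> /eqP; rewrite floor_eq => /andP[h1 h2].
  by rewrite in_itv /=; apply/andP; split; lra.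
rewrite in_itv /= => /andP[h1 h2]; apply/eqP; rewrite floor_eq.
by apply/andP; split; lra.
Qed.

Lemma meas_step (R : realType) (beta : int -> R) (c : R) :
  measurable_fun [set: R] (fun y => beta (Num.floor (c - y))).
Proof.
move=> _ B mB; rewrite setTI.
have -> : (fun y => beta (Num.floor (c - y))) @^-1` B =
    \bigcup_(j : int) ([set y : R | Num.floor (c - y) = j] `&` [set _ | B (beta j)]).
  apply/seteqP; split => y /=.
    by move=> By; exists (Num.floor (c - y)) => //.
  by move=> [j _ [/= -> ?]].
apply: countable_bigcupT_measurable => // j.
apply: measurableI; first by rewrite floor_set; exact: measurable_itv.
case: (pselect (B (beta j))) => h.
  by rewrite (_ : [set _ | _] = setT); [exact: measurableT|apply/seteqP; split].
by rewrite (_ : [set _ | _] = set0); [exact: measurable0|apply/seteqP; split].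
Qed.


Definition asup (R : realType) (g : R -> R) (j : int) : \bar R :=
  ereal_sup [set (g z)%:E | z in `[(j%:~R : R), j%:~R + 1[ ].

Arguments asup {R}.

Lemma amalgamE (R : realType) (g : R -> R) :
  amalgam_sum g = (\esum_(m in [set: int]) asup g m)%E.
Proof. by []. Qed.

Lemma in_floor_itv (R : realType) (u : R) :
  `[((Num.floor u)%:~R : R), (Num.floor u)%:~R + 1[%classic u.
Proof.
by rewrite /= in_itv /= floor_le /= -[1]/(1%:~R) -intrD floorD1_gt.
Qed.

Lemma asup_ge (R : realType) (g : R -> R) (u : R) :
  ((g u)%:E <= asup g (Num.floor u))%E.
Proof. by apply: ereal_sup_ubound; exists u => //; exact: in_floor_itv. Qed.

Lemma step (R : realType) (f : R -> R) (eps : R) (k : nat) :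
  measurable_fun [set: R] f -> 0 < eps ->
  (\int[@lebesgue_measure R]_y ((1 + `|y| `^ eps) * `|f y|)%:E < +oo)%E ->
  (1 <= k)%N ->
  (amalgam_sum (gk f eps k) < +oo)%E -> (amalgam_sum (gk f eps k.+1) < +oo)%E.
Proof.
move=> mf e0 hW; case: k => [//|k] _ hA.
set mu := @lebesgue_measure R.
set w := fun y : R => (1 + `|y| `^ eps) * `|f y|.
have w0 : forall y, 0 <= w y by move=> y; rewrite mulr_ge0// addr_ge0// powR_ge0.
have mw : measurable_fun [set: R] w.
  apply: measurable_funM; last exact: measurableT_comp.
  apply: measurable_funD => //; exact: measurableT_comp (@measurable_powR R eps) _.
set G := gk f eps k.+1.
have G0 : forall u, 0 <= G u by move=> u; rewrite mulr_ge0// addr_ge0// powR_ge0.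
have a0 : forall j, (0 <= asup G j)%E.
  move=> j; apply: le_trans (_ : (G j%:~R)%:E <= _)%E; first by rewrite lee_fin.
  by apply: ereal_sup_ubound; exists j%:~R => //=; rewrite in_itv /= lexx ltrDl ltr01.
move: hA; rewrite amalgamE => hA.
set A := (\esum_(m in [set: int]) asup G m)%E in hA.
have A0 : (0 <= A)%E by apply: esum_ge0.
have aleA : forall j, (asup G j <= A)%E.
  move=> j; apply: esum_ge; exists [set j]; first by split => //; exact: finite_set1.
  by rewrite fsbig_set1.
pose al j := fine (asup G j).
have alE : forall j, asup G j = (al j)%:E.
  move=> j; rewrite /al fineK// ge0_fin_numE//; exact: le_lt_trans (aleA j) hA.
have al0 : forall j, 0 <= al j by move=> j; rewrite -lee_fin -alE.
pose Ar := fine A.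
have AE : A = Ar%:E by rewrite /Ar fineK// ge0_fin_numE.
have Gle : forall u, G u <= al (Num.floor u).
  by move=> u; rewrite -lee_fin -alE; exact: asup_ge.
have sumle : forall (F : set int) (t : int), finite_set F ->
    \sum_(j \in F) al (j + t) <= Ar.
  move=> F t finF; rewrite -lee_fin -fsumEFin// -AE.
  rewrite (eq_fsbigr (fun j => asup G (j + t))); last by move=> j _; rewrite alE.
  have -> : A = (\esum_(i in [set: int]) asup G (i + t))%E.
    rewrite /A -(esum_image _ (fun i => i + t)); last by move=> x y _ _ /addIr.
    congr esum; apply/seteqP; split => // j _; exists (j - t) => //; exact: subrK.
  by apply: esum_ge; exists F.
have hW' : (\int[mu]_y (w y)%:E < +oo)%E := hW.
pose psi (m : int) (y : R) := 2 `^ eps *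
  ((al (Num.floor (m%:~R - y)) + al (Num.floor (m%:~R - y) + 1)) * w y).
have psi0 : forall m y, 0 <= psi m y.
  by move=> m y; rewrite mulr_ge0 ?powR_ge0// mulr_ge0// addr_ge0.
have mpsi : forall m, measurable_fun [set: R] (psi m).
  move=> m; apply: measurable_funM => //; apply: measurable_funM => //.
  apply: measurable_funD; first exact: meas_step.
  by have := @meas_step R (fun j => al (j + 1)) m%:~R.
have flc : forall (m : int) (x y : R), m%:~R <= x -> x < m%:~R + 1 ->
    al (Num.floor (x - y)) <= al (Num.floor (m%:~R - y)) + al (Num.floor (m%:~R - y) + 1).
  move=> m x y xm1 xm2.
  set t := Num.floor (m%:~R - y).
  have h1 : t <= Num.floor (x - y) by apply: le_floor; lra.
  have h2 : Num.floor (x - y) < t + 1 + 1.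
    rewrite floor_lt_int; have := floorD1_gt (m%:~R - y); rewrite -/t !intrD.
    rewrite (_ : 1%:~R = 1)//; lra.
  have [->|->] : Num.floor (x - y) = t \/ Num.floor (x - y) = t + 1 by lia.
    by rewrite lerDl.
  by rewrite lerDr.
have hx : forall (m : int) (x : R), `[(m%:~R : R), m%:~R + 1[%classic x ->
    ((gk f eps k.+2 x)%:E <= \int[mu]_y (psi m y)%:E)%E.
  move=> m x /=; rewrite in_itv /= => /andP[xm1 xm2].
  set c := 1 + `|x| `^ eps.
  have c0 : 0 < c by rewrite /c ltr_pwDl// powR_ge0.
  have gE : gk f eps k.+2 x =
      c * `|Rintegral mu setT (fun y => fpow f k.+1 (x - y) * f y)| by [].
  have pt : forall y, `|fpow f k.+1 (x - y) * f y| <= c^-1 * psi m y.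
    move=> y; rewrite -[X in X <= _](mulKf (lt0r_neq0 c0)); apply: ler_wpM2l.
      by rewrite invr_ge0 ltW.
    rewrite normrM.
    have hp := @powR_ineq R eps x y (ltW e0).
    have P0 := normr_ge0 (fpow f k.+1 (x - y)).
    have Q0 := normr_ge0 (f y).
    have U0 := powR_ge0 `|x - y| eps.
    have V0 := powR_ge0 `|y| eps.
    have T0 := powR_ge0 2 eps.
    apply: le_trans (_ : 2 `^ eps * (G (x - y) * w y) <= _).
      rewrite /G /gk /w -/c.
      set P := `|fpow f k.+1 (x - y)|; set Q := `|f y|.
      set U := `|x - y| `^ eps; set V := `|y| `^ eps.
      have PQ0 : 0 <= P * Q by rewrite mulr_ge0.
      apply: le_trans (_ : (2 `^ eps * ((1 + U) * (1 + V))) * (P * Q) <= _).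
        exact: ler_wpM2r.
      by rewrite le_eqVlt; apply/orP; left; apply/eqP; ring.
    apply: ler_wpM2l => //; apply: ler_wpM2r => //.
    exact: le_trans (Gle (x - y)) (flc m x y xm1 xm2).
  have hint : ((`|Rintegral mu setT (fun y => fpow f k.+1 (x - y) * f y)|)%:E <=
      \int[mu]_y (c^-1 * psi m y)%:E)%E.
    apply: le_trans (abs_Rint mu _) _.
    by apply: le_int_nm => y; rewrite lee_fin.
  have hZ : (\int[mu]_y (c^-1 * psi m y)%:E = (c^-1)%:E * \int[mu]_y (psi m y)%:E)%E.
    under eq_integral do rewrite EFinM.
    apply: ge0_integralZl_EFin => //.
    - by move=> y _; rewrite lee_fin.
    - by apply/measurable_EFinP; exact: mpsi.
    - by rewrite invr_ge0 ltW.
  rewrite gE EFinM; apply: le_trans (lee_wpmul2l _ hint) _.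
    by rewrite lee_fin ltW.
  by rewrite hZ muleA -EFinM mulfV ?lt0r_neq0// mul1e.
have hsup : forall m, (asup (gk f eps k.+2) m <= \int[mu]_y (psi m y)%:E)%E.
  by move=> m; apply: ge_ereal_sup => _ [x hxm <-]; exact: hx.
have W0 : (0 <= \int[mu]_y (w y)%:E)%E by apply: integral_ge0 => y _; rewrite lee_fin.
have fl : forall (i : int) (y : R), Num.floor (i%:~R - y) = i + Num.floor (- y).
  by move=> i y; rewrite floorDzr ?intr_int// intrKfloor.
rewrite amalgamE.
apply: le_lt_trans (_ : _ <= (2 `^ eps * (2 * Ar))%:E * \int[mu]_y (w y)%:E)%E _;
  last first.
  have WE : (\int[mu]_y (w y)%:E = (fine (\int[mu]_y (w y)%:E))%:E)%E.
    by rewrite fineK// ge0_fin_numE.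
  by rewrite WE -EFinM ltry.
rewrite /esum; apply: ge_ereal_sup => _ [F [finF _] <-].
apply: le_trans (lee_fsum finF (fun m _ => hsup m)) _.
rewrite -ge0_integral_fsum//; last 2 first.
  - by move=> m; apply/measurable_EFinP; exact: mpsi.
  - by move=> m y _; rewrite lee_fin.
rewrite -ge0_integralZl_EFin//; last 3 first.
  - by move=> y _; rewrite lee_fin.
  - by apply/measurable_EFinP; exact: mw.
  - by rewrite mulr_ge0 ?powR_ge0// mulr_ge0// -lee_fin -AE.
apply: le_int_nm => y.
  by apply: fsume_ge0 => m _; rewrite lee_fin.
rewrite fsumEFin// -EFinM lee_fin.
rewrite /psi -mulr_fsumr -mulrA ler_wpM2l ?powR_ge0//.
rewrite -mulr_fsuml ler_wpM2r// fsbig_split//.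
rewrite (eq_fsbigr (fun i => al (i + Num.floor (- y)))); last by move=> i _; rewrite fl.
rewrite [X in _ + X <= _](eq_fsbigr (fun i => al (i + (Num.floor (- y) + 1)))); last by move=> i _; rewrite fl addrA.
have := sumle F (Num.floor (- y)) finF; have := sumle F (Num.floor (- y) + 1) finF.
lra.
Qed.

Theorem mainTheorem14 (R : realType) (f : R -> R) (eps : R) (kbar : nat) :
  (@lebesgue_measure R).-integrable [set: R] (EFin \o f) ->
  0 < eps ->
  (\int[@lebesgue_measure R]_y (`|y| `^ eps * `|f y|)%:E < +oo)%E ->
  (1 <= kbar)%N ->
  (amalgam_sum (gk f eps kbar) < +oo)%E ->
  forall k : nat, (kbar <= k)%N -> (amalgam_sum (gk f eps k) < +oo)%E.
Proof.
move=> fint e0 hI k1 hA k hk.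
have mf : measurable_fun [set: R] f.
  by apply/measurable_EFinP; exact: measurable_int fint.
have hW : (\int[@lebesgue_measure R]_y ((1 + `|y| `^ eps) * `|f y|)%:E < +oo)%E.
  rewrite (_ : (fun y => ((1 + `|y| `^ eps) * `|f y|)%:E) =
      (fun y => (`|f y|)%:E + (`|y| `^ eps * `|f y|)%:E)%E); last first.
    by apply/funext => y; rewrite -EFinD mulrDl mul1r.
  rewrite ge0_integralD//; last 2 first.
  - by apply/measurable_EFinP; exact: measurableT_comp.
  - apply/measurable_EFinP; apply: measurable_funM => //; last exact: measurableT_comp.
    exact: measurableT_comp (@measurable_powR R eps) _.
  apply: lte_add_pinfty => //.
  case/integrableP: fint => _; apply: le_lt_trans.
  by rewrite le_eqVlt; apply/orP; left; apply/eqP; apply: eq_integral.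
rewrite -(subnK hk); elim: (k - kbar)%N => [|n IH]; first by rewrite add0n.
rewrite addSn; apply: step => //.
exact: leq_trans k1 (leq_addl _ _).
Qed.
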